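(* There is an absolute constant $C>0$ such that for every sufficiently large prime $p$ and every $f:\mathbb{F}_p\to\mathbb{C}$, $$\Big|\sum_{\substack{x_1,x_2,x_3\in\mathbb{F}_p\\ x_1\neq x_3}} f(x_1)\,\overline{f(x_3)}\,\overline{f(x_2)}\,f(x_2+x_3-x_1)\,K_1(x_1,x_2,x_3)\Big|\le C\,p^{-3/4}\,\|f\|_2^4 .$$
   Context: Let $p$ be an odd prime, $e_p(x)=e^{-2\pi i x/p}$ for $x\in\mathbb{F}_p$, $\|f\|_2=\big(\sum_{x\in\mathbb{F}_p}|f(x)|^2\big)^{1/2}$. For $x_1,x_2,x_3\in\mathbb{F}_p$ and $y_1,y_2,y_3\in\mathbb{F}_p$ set $$R_1=x_1y_1^2-x_2y_2^2-x_3y_3^2+(x_3+x_2-x_1)(y_2+y_3-y_1)^2+(x_2-x_1)(y_1-y_3),$$ and define $K_1(x_1,x_2,x_3)=p^{-3}\sum_{y_1,y_2,y_3\in\mathbb{F}_p}e_p(R_1)$. *)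

(* Defs.v *)
From HB Require Import structures.
From mathcomp Require Import all_boot all_order all_algebra.
From mathcomp Require Import Rstruct.
From mathcomp.real_closed Require Import complex.
From Stdlib Require Import Reals.
Set Implicit Arguments. Unset Strict Implicit. Unset Printing Implicit Defensive.
Import Order.TTheory GRing.Theory Num.Theory.
Local Open Scope ring_scope.

Notation Cx := (complex R).

(* e_p(x) = exp(-2 pi i x / p), x in F_p represented by its value in [0,p) *)
Definition ep (p : nat) (x : 'F_p) : Cx :=
  let t : R := (2 * PI * INR (val x) / INR p)%R in
  Complex (cos t) (- sin t)%R.

Definition R1 (p : nat) (x1 x2 x3 y1 y2 y3 : 'F_p) : 'F_p :=
  x1 * y1 ^+ 2 - x2 * y2 ^+ 2 - x3 * y3 ^+ 2
  + (x3 + x2 - x1) * (y2 + y3 - y1) ^+ 2 + (x2 - x1) * (y1 - y3).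

Definition K1 (p : nat) (x1 x2 x3 : 'F_p) : Cx :=
  (p%:R ^- 3) * \sum_(y1 : 'F_p) \sum_(y2 : 'F_p) \sum_(y3 : 'F_p)
      ep (R1 x1 x2 x3 y1 y2 y3).

Definition norm2 (p : nat) (f : 'F_p -> Cx) : Cx :=
  sqrtC (\sum_(x : 'F_p) `|f x| ^+ 2).

Definition Ssum (p : nat) (f : 'F_p -> Cx) : Cx :=
  \sum_(x1 : 'F_p) \sum_(x2 : 'F_p) \sum_(x3 : 'F_p | x1 != x3)
     f x1 * conjc (f x3) * conjc (f x2) * f (x2 + x3 - x1) * K1 x1 x2 x3.

(* Main.v *)
Require Import Defs.
From HB Require Import structures.
From mathcomp Require Import all_boot all_order all_algebra.
From mathcomp Require Import Rstruct.
From mathcomp.real_closed Require Import complex.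
From Stdlib Require Import Reals.
From mathcomp.algebra_tactics Require Import ring lra.
Import Order.TTheory GRing.Theory Num.Theory.
Local Open Scope ring_scope.

Lemma conjcM (x y : Cx) : conjc (x * y) = conjc x * conjc y.
Proof. exact: rmorphM. Qed.

Section E.
Variable p : nat.
Hypothesis pr : prime p.

Lemma valFpD (a b : 'F_p) : val (a + b) = ((val a + val b) %% p)%nat.
Proof. by rewrite /=; congr (_ %% _)%nat; exact: Fp_cast. Qed.

Lemma epD (a b : 'F_p) : ep (a + b) = ep a * ep b.
Proof.
have p0 : INR p <> 0%R by apply: not_0_INR; move/eqP: (prime_gt0 pr); case: p.
rewrite /ep valFpD.
set A := (2 * PI * INR (val a) / INR p)%R.
set B := (2 * PI * INR (val b) / INR p)%R.
set r := ((val a + val b) %% p)%nat.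
set q := ((val a + val b) %/ p)%nat.
have e : (A + B = 2 * PI * INR r / INR p + 2 * INR q * PI)%R.
  have e : (INR (val a) + INR (val b) = INR r + INR q * INR p)%R.
    rewrite -mult_INR -plus_INR -plus_INR; congr INR.
    by rewrite !plusE multE /r /q [in RHS]addnC -divn_eq.
  rewrite /A /B. field_simplify_eq => //. rewrite -Rmult_plus_distr_l e. rewrite ?RealsE; ring.
have -> : cos (2 * PI * INR r / INR p) = cos (A + B) by rewrite e cos_period.
have -> : sin (2 * PI * INR r / INR p) = sin (A + B) by rewrite e sin_period.
rewrite cos_plus sin_plus /=.
congr Complex; rewrite ?RealsE; ring.
Qed.


Lemma epJ (a : 'F_p) : ep a * conjc (ep a) = 1.
Proof.
rewrite /ep /=; set t := (2 * PI * _ / _)%R.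
have h := sin2_cos2 t; rewrite /Rsqr in h.
apply/eqP; rewrite eq_complex /= !RealsE; apply/andP; split; apply/eqP.
- rewrite ?RealsE in h *. rewrite -h; ring.
- ring.
Qed.

Lemma ep_neq0 (a : 'F_p) : ep a != 0.
Proof. by apply/eqP => h; have := epJ a; rewrite h mul0r => /eqP; rewrite eq_sym oner_eq0. Qed.

Lemma ep0 : ep (0 : 'F_p) = 1.
Proof.
have h := epD 0 0; rewrite addr0 in h.
by apply: (mulfI (ep_neq0 0)); rewrite mulr1 -h.
Qed.

Lemma epN (a : 'F_p) : ep (- a) = conjc (ep a).
Proof.
apply: (mulfI (ep_neq0 a)); rewrite epJ -epD subrr ep0 //.
Qed.

Lemma card_F : #|'F_p| = p.
Proof. exact: card_Fp. Qed.

Lemma val1 : (2 < p)%nat -> val (1 : 'F_p) = 1%nat.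
Proof. move=> h; rewrite /= modn_small //; rewrite (Fp_cast pr) ltnW. Qed.

Hypothesis p2 : (2 < p)%nat.

Lemma ep1_neq1 : ep (1 : 'F_p) != 1.
Proof.
rewrite /ep val1 //; rewrite eq_complex /= negb_and; apply/orP; right; apply/eqP.
have hp : (2 < p%:R :> R) by rewrite ltr_nat.
have pi0 : 0 < PI by apply/RltP; exact: PI_RGT_0.
have s0 : 0 < sin (2 * PI * INR 1 / INR p).
  apply/RltP; apply: sin_gt_0; apply/RltP; rewrite !RealsE mulr1;
  rewrite (_ : (nat_of_pos 2)%:R = 2 :> R) //.
  - by apply: divr_gt0; [apply: mulr_gt0 =>//|lra].
  - have pp : 0 < p%:R :> R by lra.
    rewrite ltr_pdivrMr //. nra.
move=> e; have : sin (2 * PI * INR 1 / INR p) = 0 by rewrite -[RHS]oppr0 -e opprK.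
by move=> e2; rewrite e2 ltxx in s0.
Qed.

Lemma sum_ep : \sum_(z : 'F_p) ep z = 0.
Proof.
set S := \sum_(z : 'F_p) ep z.
have e : ep (1 : 'F_p) * S = S.
  rewrite /S big_distrr [RHS](reindex_inj (addrI (1 : 'F_p))) /=.
  by apply: eq_bigr => z _; rewrite epD.
have : (ep (1 : 'F_p) - 1) * S = 0 by rewrite mulrBl e mul1r subrr.
by move/eqP; rewrite mulf_eq0 subr_eq0 (negbTE ep1_neq1) => /eqP.
Qed.

Lemma orth (a : 'F_p) : \sum_(y : 'F_p) ep (a * y) = if a == 0 then p%:R else 0.
Proof.
have [->|a0] := eqVneq a 0.
  under eq_bigr do rewrite mul0r ep0.
  by rewrite sumr_const card_F.
transitivity (\sum_(y : 'F_p) ep y); last exact: sum_ep.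
by rewrite [in RHS](reindex_inj (mulfI a0)).
Qed.

Lemma two_neq0 : (2 : 'F_p) != 0.
Proof.
apply/eqP => h; have := congr1 val h; rewrite (_ : (2 : 'F_p) = 1 + 1) //.
by rewrite valFpD val1 // modn_small.
Qed.

Lemma gauss_pair (c : 'F_p) : c != 0 ->
  (\sum_(y : 'F_p) ep (- c * y ^+ 2)) * (\sum_(z : 'F_p) ep (c * z ^+ 2)) = p%:R.
Proof.
move=> c0.
rewrite big_distrl /=.
under eq_bigr => y _ do rewrite big_distrr (reindex_inj (addrI y)) /=.
have E : forall y h : 'F_p, ep (- c * y ^+ 2) * ep (c * (y + h) ^+ 2) =
   ep (c * h ^+ 2) * ep ((2 * c * h) * y).
  by move=> y h; rewrite -!epD; congr ep; ring.
under eq_bigr => y _ do under eq_bigr => h _ do rewrite E.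
rewrite exchange_big /=.
under eq_bigr => h _ do rewrite -big_distrr /= orth.
rewrite (bigD1 0) //= big1 ?addr0.
  by rewrite !mulr0 eqxx expr0n /= mulr0 ep0 mul1r.
move=> h h0; rewrite !mulf_eq0 (negbTE two_neq0) (negbTE c0) (negbTE h0) /=.
by rewrite mulr0.
Qed.

Definition Kt (x1 x2 x3 : 'F_p) : Cx :=
  p%:R ^- 2 * \sum_(v : 'F_p) ep ((x2 - x1) * (x3 - x1) * (v - (x2 + x3) * v ^+ 2)).

Lemma aff_inj (y k : 'F_p) : k != 0 -> injective (fun v => y + k * v).
Proof. by move=> k0 u v /= /addrI /(mulfI k0). Qed.

Lemma pnat_neq0 : (p%:R : Cx) != 0.
Proof. by rewrite pnatr_eq0 -lt0n prime_gt0. Qed.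

Lemma K1_eq (x1 x2 x3 : 'F_p) : x1 != x3 -> K1 x1 x2 x3 = Kt x1 x2 x3.
Proof.
move=> h13; set c := x3 - x1.
have c0 : c != 0 by rewrite subr_eq0 eq_sym.
have nc0 : - c != 0 by rewrite oppr_eq0.
rewrite /K1 /Kt.
under eq_bigr => y1 _ do rewrite exchange_big /=.
under eq_bigr => y1 _ do rewrite (reindex_inj (@aff_inj y1 (- c) nc0)) /=.
under eq_bigr => y1 _ do under eq_bigr => v _ do
  rewrite (reindex_inj (addrI ((x2 + c) * v))) /=.
rewrite exchange_big /=.
under eq_bigr => v _ do rewrite (reindex_inj (addrI ((x1 + c) * v))) /=.
have E : forall v y z : 'F_p,
  ep (Defs.R1 x1 x2 x3 ((x1 + c) * v + y) ((x2 + c) * v + z) ((x1 + c) * v + y + - c * v))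
  = ep ((x2 - x1) * (x3 - x1) * (v - (x2 + x3) * v ^+ 2)) *
    (ep (- c * y ^+ 2) * ep (c * z ^+ 2)).
  move=> v y z; rewrite -!epD; congr ep; rewrite /Defs.R1 /c; ring.
under eq_bigr => v _ do under eq_bigr => y _ do under eq_bigr => z _ do rewrite E.
under eq_bigr => v _ do under eq_bigr => y _ do rewrite -big_distrr /=.
have G : \sum_(i : 'F_p) \sum_(j : 'F_p) ep (- c * i ^+ 2) * ep (c * j ^+ 2) = p%:R.
  by rewrite -(gauss_pair c c0) big_distrl /=; apply: eq_bigr => i _; rewrite big_distrr.
under eq_bigr => v _ do rewrite -big_distrr /= G.
rewrite -big_distrl /= [_ * p%:R]mulrC mulrA; congr (_ * _).
rewrite -exprVn -[in RHS]exprVn (_ : 3 = 2 + 1)%nat // exprD expr1 -mulrA mulVf ?mulr1 //.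
exact: pnat_neq0.
Qed.

Lemma sum_eq1 (v1 : 'F_p) : \sum_(v : 'F_p) (if v == v1 then 1 else 0 : Cx) = 1.
Proof. by rewrite -big_mkcond big_pred1_eq. Qed.

Lemma cnt (k m w : 'F_p) : (k != 0) || (m != 0) ->
  \sum_(v : 'F_p) (if k * v ^+ 2 + m * v == w then 1 else 0 : Cx) <= 2.
Proof.
move=> km.
have [v1 hv1|none] := pickP (fun v => k * v ^+ 2 + m * v == w); last first.
  by rewrite big1 ?ler0n // => v _; rewrite none.
set v2 := - v1 - m / k.
apply: (@le_trans _ _ (\sum_(v : 'F_p) ((if v == v1 then 1 else 0) + (if v == v2 then 1 else 0)))).
  apply: ler_sum => v _.
  case: ifP => hv; last by rewrite addr_ge0 // ; case: ifP.
  have : (v - v1) * (k * (v + v1) + m) == 0.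
    move/eqP: hv1 => e1; move/eqP: hv => e; apply/eqP.
    transitivity ((k * v ^+ 2 + m * v) - (k * v1 ^+ 2 + m * v1)); first ring.
    by rewrite e e1 subrr.
  rewrite mulf_eq0 subr_eq0 => /orP [/eqP ->|]; first by rewrite eqxx lerDl; case: ifP.
  have [k0|k0] := eqVneq k 0.
    by rewrite k0 mul0r add0r; move: km; rewrite k0 eqxx /= => /negbTE ->.
  move=> /eqP e.
  have -> : v == v2.
    apply/eqP; rewrite /v2; apply: (mulfI k0).
    rewrite mulrBr mulrN mulrCA divff // mulr1.
    by apply/eqP; rewrite -subr_eq0; apply/eqP; rewrite -e; ring.
  by rewrite lerDr; case: ifP.
by rewrite big_split /= !sum_eq1.
Qed.

Lemma fiber (s : 'F_p) (g : 'F_p -> Cx) : (forall w, 0 <= g w) ->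
  \sum_(v : 'F_p) g (v - s * v ^+ 2) <= 2 * \sum_(w : 'F_p) g w.
Proof.
move=> g0.
have E : forall v : 'F_p, g (v - s * v ^+ 2) =
    \sum_(w : 'F_p) (if w == (- s) * v ^+ 2 + 1 * v then g w else 0).
  move=> v; rewrite -big_mkcond big_pred1_eq; congr g; ring.
under eq_bigr => v _ do rewrite E.
rewrite exchange_big /= mulr_sumr; apply: ler_sum => w _.
have -> : \sum_(v : 'F_p) (if w == - s * v ^+ 2 + 1 * v then g w else 0)
   = g w * \sum_(v : 'F_p) (if - s * v ^+ 2 + 1 * v == w then 1 else 0).
  rewrite mulr_sumr; apply: eq_bigr => v _; rewrite eq_sym.
  by case: ifP; rewrite ?mulr1 ?mulr0.
rewrite mulrC; apply: ler_wpM2r => //; apply: cnt.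
by rewrite oner_eq0 orbT.
Qed.

Lemma sum_normsq (X : 'F_p -> 'F_p -> Cx) :
  \sum_(b : 'F_p) \sum_(a : 'F_p) \sum_(v : 'F_p) X a v * conjc (X b v)
  = \sum_(v : 'F_p) `|\sum_(a : 'F_p) X a v| ^+ 2.
Proof.
under [RHS]eq_bigr => v _ do rewrite sqr_normc rmorph_sum big_distrl /=.
under [RHS]eq_bigr => v _ do under eq_bigr => a _ do rewrite big_distrr /=.
under [LHS]eq_bigr => b _ do rewrite exchange_big /=.
rewrite [LHS]exchange_big /=; apply: eq_bigr => v _.
by rewrite [LHS]exchange_big.
Qed.

Definition hf : 'F_p := (2 : 'F_p)^-1.

Lemma hf_neq0 : hf != 0.
Proof. by rewrite /hf invr_eq0 two_neq0. Qed.

Lemma hf2 : hf + hf = 1.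
Proof. rewrite /hf; transitivity (2 * (2 : 'F_p)^-1); first ring. exact: (mulfV two_neq0). Qed.

Lemma reparam2 (H : 'F_p -> 'F_p -> Cx) :
  \sum_(x2 : 'F_p) \sum_(x3 : 'F_p) H x2 x3 =
  \sum_(s : 'F_p) \sum_(b : 'F_p) H (s * hf + b) (s * hf - b).
Proof.
have n2 : - 2 != 0 :> 'F_p by rewrite oppr_eq0 two_neq0.
under eq_bigr => x2 _ do rewrite (reindex_inj (@aff_inj x2 (- 2) n2)) /=.
rewrite exchange_big /=.
under eq_bigr => b _ do rewrite (reindex_inj (@aff_inj b hf hf_neq0)) /=.
rewrite exchange_big /=; apply: eq_bigr => s _; apply: eq_bigr => b _.
congr H; ring.
Qed.

Lemma reparam3 (G : 'F_p -> 'F_p -> 'F_p -> Cx) :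
  \sum_(x1 : 'F_p) \sum_(x2 : 'F_p) \sum_(x3 : 'F_p) G x1 x2 x3 =
  \sum_(s : 'F_p) \sum_(b : 'F_p) \sum_(a : 'F_p) G (s * hf - a) (s * hf + b) (s * hf - b).
Proof.
rewrite exchange_big /=.
under eq_bigr => x2 _ do rewrite exchange_big /=.
rewrite (reparam2 (fun x2 x3 => \sum_(x1 : 'F_p) G x1 x2 x3)) /=.
have n1 : - 1 != 0 :> 'F_p by rewrite oppr_eq0 oner_eq0.
apply: eq_bigr => s _; apply: eq_bigr => b _.
rewrite (reindex_inj (@aff_inj (s * hf) (- 1) n1)) /=.
apply: eq_bigr => a _; congr G; ring.
Qed.

Section Fsec.
Variable f : 'F_p -> Cx.

Definition P (s a : 'F_p) : Cx := f (s * hf - a) * f (s * hf + a).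
Definition Q (s w : 'F_p) : Cx := \sum_(a : 'F_p) P s a * ep (a ^+ 2 * w).

Lemma PN s a : P s (- a) = P s a.
Proof. rewrite /P mulrC; congr (_ * _); congr f; ring. Qed.

Lemma C2 s : \sum_(w : 'F_p) `|Q s w| ^+ 2 <= 2 * p%:R * \sum_(a : 'F_p) `|P s a| ^+ 2.
Proof.
rewrite /Q -(sum_normsq (fun a w => P s a * ep (a ^+ 2 * w))).
have E : forall a b w : 'F_p, P s a * ep (a ^+ 2 * w) * conjc (P s b * ep (b ^+ 2 * w))
   = (P s a * conjc (P s b)) * ep ((a ^+ 2 - b ^+ 2) * w).
  move=> a b w; rewrite conjcM -epN mulrACA -epD; congr (_ * ep _); ring.
under eq_bigr => b _ do under eq_bigr => a _ do under eq_bigr => w _ do rewrite E.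
under eq_bigr => b _ do under eq_bigr => a _ do rewrite -big_distrr /= orth.
rewrite exchange_big /= mulr_sumr; apply: ler_sum => a _.
have -> : \sum_(b : 'F_p) P s a * conjc (P s b) * (if a ^+ 2 - b ^+ 2 == 0 then p%:R else 0)
   = (`|P s a| ^+ 2 * p%:R) * \sum_(b : 'F_p) (if 1 * b ^+ 2 + 0 * b == a ^+ 2 then 1 else 0).
  rewrite mulr_sumr; apply: eq_bigr => b _.
  rewrite mul1r mul0r addr0 subr_eq0 [b ^+ 2 == _]eq_sym.
  case: ifP => [|_]; last by rewrite !mulr0.
  rewrite eqf_sqr => /orP [] /eqP ->; rewrite ?PN sqr_normc mulr1 //.
rewrite [X in _ <= X](_ : _ = (`|P s a| ^+ 2 * p%:R) * 2); last by ring.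
apply: ler_wpM2l.
  by rewrite mulr_ge0 ?exprn_ge0 ?normr_ge0 ?ler0n.
by apply: cnt; rewrite oner_eq0.
Qed.

Definition Ft (x1 x2 x3 : 'F_p) : Cx :=
  f x1 * conjc (f x3) * conjc (f x2) * f (x2 + x3 - x1).

Definition Xf (s a v : 'F_p) : Cx := P s a * ep (a ^+ 2 * (v - s * v ^+ 2)).

Lemma G_eq s b a :
  Ft (s * hf - a) (s * hf + b) (s * hf - b) * Kt (s * hf - a) (s * hf + b) (s * hf - b)
  = p%:R ^- 2 * \sum_(v : 'F_p) Xf s a v * conjc (Xf s b v).
Proof.
have hs : s * hf + b + (s * hf - b) = s.
  by rewrite -[RHS]mulr1 -hf2; ring.
have EF : Ft (s * hf - a) (s * hf + b) (s * hf - b) = P s a * conjc (P s b).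
  rewrite /Ft /P conjcM hs.
  rewrite (_ : s - (s * hf - a) = s * hf + a); last by rewrite -{1}[s]mulr1 -hf2; ring.
  ring.
rewrite EF /Kt hs mulrCA; congr (_ * _); rewrite big_distrr /=.
apply: eq_bigr => v _; rewrite /Xf [conjc (P s b * _)]conjcM -epN.
rewrite (_ : ep _ = ep (a ^+ 2 * (v - s * v ^+ 2)) * ep (- (b ^+ 2 * (v - s * v ^+ 2)))).
  ring.
by rewrite -epD; congr ep; ring.
Qed.

Definition T : Cx := \sum_(x1 : 'F_p) \sum_(x2 : 'F_p) \sum_(x3 : 'F_p)
   Ft x1 x2 x3 * Kt x1 x2 x3.

Lemma T_eq : T = p%:R ^- 2 * \sum_(s : 'F_p) \sum_(v : 'F_p) `|Q s (v - s * v ^+ 2)| ^+ 2.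
Proof.
rewrite /T reparam3 mulr_sumr; apply: eq_bigr => s _.
under eq_bigr => b _ do under eq_bigr => a _ do rewrite G_eq.
rewrite -(sum_normsq (Xf s)) mulr_sumr; apply: eq_bigr => b _.
by rewrite mulr_sumr; apply: eq_bigr => a _.
Qed.

Definition N : Cx := \sum_(x : 'F_p) `|f x| ^+ 2.

Lemma N_ge0 : 0 <= N.
Proof. by apply: sumr_ge0 => x _; rewrite exprn_ge0 ?normr_ge0. Qed.

Lemma Kt_diag x1 x2 : Kt x1 x2 x1 = p%:R^-1.
Proof.
rewrite /Kt subrr mulr0 ?mul0r.
under eq_bigr do rewrite mul0r ep0.
rewrite sumr_const card_F -mulr_natr mul1r.
rewrite -exprVn expr2 -mulrA mulVf ?mulr1 //; exact: pnat_neq0.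
Qed.

Lemma Ft_diag x1 x2 : Ft x1 x2 x1 = `|f x1| ^+ 2 * `|f x2| ^+ 2.
Proof. rewrite /Ft addrK !sqr_normc; ring. Qed.

Lemma S_eq : Ssum f = T - p%:R^-1 * N ^+ 2.
Proof.
have E : forall x1 x2 : 'F_p,
   \sum_(x3 : 'F_p | x1 != x3) Ft x1 x2 x3 * K1 x1 x2 x3 =
   \sum_(x3 : 'F_p) Ft x1 x2 x3 * Kt x1 x2 x3 - `|f x1| ^+ 2 * `|f x2| ^+ 2 * p%:R^-1.
  move=> x1 x2; rewrite [X in _ = X - _](bigD1 x1) //= Kt_diag Ft_diag addrC addrK.
  apply: eq_big => [x3|x3 h]; first by rewrite eq_sym.
  by rewrite K1_eq.
rewrite /Ssum.
under eq_bigr => x1 _ do under eq_bigr => x2 _ do rewrite E.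
under eq_bigr => x1 _ do rewrite sumrB.
rewrite sumrB /T; congr (_ - _).
rewrite expr2 mulrC big_distrl /= big_distrl /=; apply: eq_bigr => x1 _.
rewrite /N big_distrr /= big_distrl /=; apply: eq_bigr => x2 _; ring.
Qed.

Lemma sumP : \sum_(s : 'F_p) \sum_(a : 'F_p) `|P s a| ^+ 2 = N ^+ 2.
Proof.
transitivity (\sum_(s : 'F_p) \sum_(b : 'F_p)
   (fun x y => `|f x| ^+ 2 * `|f y| ^+ 2) (s * hf + b) (s * hf - b)).
  apply: eq_bigr => s _; apply: eq_bigr => a _; rewrite /P normrM exprMn mulrC //.
rewrite -(reparam2 (fun x y => `|f x| ^+ 2 * `|f y| ^+ 2)) expr2 /N big_distrl /=; apply: eq_bigr => x _.
by rewrite big_distrr.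
Qed.

Lemma pinv_ge0 : 0 <= (p%:R : Cx)^-1.
Proof. by rewrite invr_ge0 ler0n. Qed.

Lemma T_ge0 : 0 <= T.
Proof.
rewrite T_eq; apply: mulr_ge0; first by rewrite -exprVn exprn_ge0 // pinv_ge0.
by apply: sumr_ge0 => s _; apply: sumr_ge0 => v _; rewrite exprn_ge0 ?normr_ge0.
Qed.

Lemma T_le : T <= 4 * p%:R^-1 * N ^+ 2.
Proof.
rewrite T_eq.
apply: (@le_trans _ _ (p%:R ^- 2 * \sum_(s : 'F_p) (2 * (2 * p%:R * \sum_(a : 'F_p) `|P s a| ^+ 2)))).
  apply: ler_wpM2l; first by rewrite -exprVn exprn_ge0 // pinv_ge0.
  apply: ler_sum => s _.
  apply: le_trans; first by apply: (@fiber s (fun w => `|Q s w| ^+ 2)) => w; rewrite exprn_ge0 ?normr_ge0.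
  by apply: ler_wpM2l => //; apply: C2.
rewrite -mulr_sumr -mulr_sumr sumP.
rewrite (_ : p%:R ^- 2 = (p%:R : Cx)^-1 * (p%:R)^-1); last by rewrite -exprVn expr2.
have pn := pnat_neq0.
rewrite le_eqVlt; apply/orP; left; apply/eqP.
by field.
Qed.

Lemma S_bound : `|Ssum f| <= 5 * p%:R^-1 * N ^+ 2.
Proof.
rewrite S_eq; apply: le_trans; first exact: ler_normB.
rewrite ger0_norm ?T_ge0 // ger0_norm; last by rewrite mulr_ge0 ?pinv_ge0 ?exprn_ge0 ?N_ge0.
apply: le_trans; first by apply: lerD; [exact: T_le | exact: lexx].
by rewrite le_eqVlt; apply/orP; left; apply/eqP; ring.
Qed.

End Fsec.

End E.

Lemma real_bound (p : nat) : (3 <= p)%nat ->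
  5 * (p%:R : R)^-1 <= 5 * Rpower (INR p) (- (3 / 4)).
Proof.
move=> hp.
have p1 : (1 <= INR p)%R by apply/RleP; rewrite INRE ler1n; apply: leq_trans hp.
have p0 : (0 < INR p)%R by apply/RltP; rewrite INRE ltr0n; apply: leq_trans hp.
have h : (Rpower (INR p) (- 1) <= Rpower (INR p) (- (3 / 4)))%R.
  apply: Rle_Rpower => //; apply/RleP; rewrite IZR_NEG ?RealsE (_ : nat_of_pos 3 = 3%nat) // (_ : nat_of_pos 4 = 4%nat) //; lra.
have e : Rpower (INR p) (-1) = Rinv (INR p) by rewrite IZR_NEG Rpower_Ropp Rpower_1.
rewrite e in h.
apply: ler_wpM2l => //; move/RleP: h; by rewrite INRE RinvE.
Qed.

Theorem mainTheorem7 :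
  exists C : R, (0 < C)%R /\
  exists P0 : nat, forall p : nat, prime p -> leq P0 p ->
    forall f : 'F_p -> Cx,
      `|Ssum f| <= Complex (C * Rpower (INR p) (- (3 / 4)))%R 0 * norm2 f ^+ 4.
Proof.
exists 5; split; first by apply/RltP; rewrite ltr0n.
exists 3%nat => p pr hp f.
apply: le_trans; first exact: (@S_bound p pr hp f).
have -> : norm2 f ^+ 4 = N p f ^+ 2.
  by rewrite /norm2 (_ : 4 = 2 * 2)%nat // exprM sqrtCK.
apply: ler_wpM2r; first by rewrite exprn_ge0 // (@N_ge0 p f).
have -> : (5 * (p%:R)^-1 : Cx) = real_complex R (5 * (p%:R)^-1).
  by rewrite rmorphM fmorphV /= !rmorph_nat.
rewrite lecR; exact: real_bound.
Qed.
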